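(* Let $N_1(I_1,O_1,r_1)$ and $N_2(I_2,O_2,r_2)$ be negators. Form the $(2,2,1)$-pole $M=\operatorname{NN}(N_1,N_2)$ by performing the junction of the connectors $O_1$ and $I_2$, and adding one new vertex $v$ incident with the semiedges $r_1$, $r_2$ (i.e. the dangling edges of $r_1$ and $r_2$ are joined to $v$) and with one new dangling edge whose free end is the semiedge $r_3$; the connectors of $M$ are $I_1=\{i,i'\}$, $O_2=\{o,o'\}$ and $\{r_3\}$. Then for every colouring $\varphi$ of $M$ we have $\varphi(i)\ne\varphi(i')$, $\varphi(o)\ne\varphi(o')$ and $\varphi(i)+\varphi(i')+\varphi(o)+\varphi(o')+\varphi(r_3)=0$. Moreover, if $N_1$ and $N_2$ are both perfect, then for every $5$-tuple $(a,b,c,d,e)\in\mathbb{K}^5$ with $a\ne b$, $c\ne d$ and $a+b+c+d+e=0$ there is a colouring $\varphi$ of $M$ with $(\varphi(i),\varphi(i'),\varphi(o),\varphi(o'),\varphi(r_3))=(a,b,c,d,e)$.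
   Context: A multipole consists of vertices and edges; each edge has two ends, each either incident with a vertex or free; a free end is a semiedge. A dangling edge has exactly one end at a vertex, an isolated edge has none. All multipoles are cubic (every vertex is incident with exactly three edge ends; loops and parallel edges allowed). The semiedges are partitioned into connectors; a $(c_1,\dots,c_n)$-pole has $n$ connectors of sizes $c_1,\dots,c_n$. The junction of two semiedges identifies the two free ends into a single edge; the junction of two connectors of equal size performs junctions of their semiedges along a bijection (arbitrary unless stated). Let $\mathbb{K}=\{(0,1),(1,0),(1,1)\}\subset\mathbb{Z}_2\times\mathbb{Z}_2$. A colouring of a multipole is an assignment of elements of $\mathbb{K}$ to its edges such that at each vertex the three incident edge ends receive distinct colours (equivalently, they sum to $0$). A snark is a connected cubic graph with no such colouring. Negator: let $G$ be a snark and $uwv$ a path of length two in $G$; $\operatorname{Neg}(G;u,v)$ is the $(2,2,1)$-pole $N(I,O,r)$ obtained by deleting $u,w,v$, where $I$ consists of the two semiedges formerly incident with $u$, $O$ of the two semiedges formerly incident with $v$, and $r$ is the semiedge formerly incident with $w$. A negator $N(\{i_1,i_2\},\{o_1,o_2\},r)$ is perfect if the set of tuples $(\varphi(i_1),\varphi(i_2),\varphi(o_1),\varphi(o_2),\varphi(r))$ over all colourings $\varphi$ of $N$ equals $\{(x,x,a,b,a+b),(a,b,x,x,a+b): x,a,b\in\mathbb{K},\ a\ne b\}$. *)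

(* Defs.v *)
From mathcomp Require Import all_boot.
Set Implicit Arguments. Unset Strict Implicit. Unset Printing Implicit Defensive.

(* Colours: K = Z2 x Z2 \ {0}, represented inside bool * bool.        *)
Definition col := (bool * bool)%type.
Definition czero : col := (false, false).
Definition inK (x : col) : bool := x != czero.
Definition cadd (x y : col) : col := (x.1 (+) y.1, x.2 (+) y.2).

(* Multipoles.  A multipole has a finite set of vertices mV and a     *)
(* finite set of edge ends mD.  [att d] is the vertex end d is        *)
(* incident with, or None when d is free (a semiedge).  Edges are the *)
(* classes of the equivalence relation generated by [lnk]; for a      *)
(* genuine multipole each class has exactly two ends ([wf_edges]).    *)
Record mpole := Mpole {
  mV : finType;
  mD : finType;
  att : mD -> option mV;
  lnk : rel mD }.

Definition eqE (M : mpole) : rel (mD M) :=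
  connect (fun a b => lnk a b || lnk b a).

Definition wf_edges (M : mpole) : Prop :=
  forall d : mD M, #|[pred d' | eqE d d']| = 2.

Definition cubic (M : mpole) : Prop :=
  forall x : mV M, #|[pred d : mD M | att d == Some x]| = 3.

Definition colouring (M : mpole) (phi : mD M -> col) : Prop :=
  [/\ (forall d, inK (phi d)),
      (forall d d', lnk d d' -> phi d = phi d') &
      (forall (d d' : mD M) (x : mV M), d != d' ->
          att d = Some x -> att d' = Some x -> phi d != phi d')].

Arguments colouring : clear implicits.

Definition colourable (M : mpole) : Prop := exists phi, colouring M phi.

Definition is_graph (M : mpole) : Prop := forall d : mD M, att d != None.

Definition adjV (M : mpole) : rel (mV M) := fun x y =>
  [exists d : mD M, exists d' : mD M,
     [&& att d == Some x, att d' == Some y & eqE d d']].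

Definition connected (M : mpole) : Prop :=
  forall x y : mV M, connect (@adjV M) x y.

Definition snark (G : mpole) : Prop :=
  [/\ wf_edges G, is_graph G, cubic G, connected G & ~ colourable G].

(* (2,2,1)-poles: a multipole with its five semiedges named           *)
(* N(I = {pi1, pi2}, O = {po1, po2}, r = pr).                          *)
Record pole221 := Pole221 {
  pm : mpole;
  pi1 : mD pm; pi2 : mD pm; po1 : mD pm; po2 : mD pm; pr : mD pm }.

Definition ptuple (N : pole221) (phi : mD (pm N) -> col) : col * col * col * col * col :=
  (phi (pi1 N), phi (pi2 N), phi (po1 N), phi (po2 N), phi (pr N)).

Arguments ptuple : clear implicits.

Definition perfect_set (t : col * col * col * col * col) : Prop :=
  exists x a b : col, [/\ inK x, inK a, inK b, a != b &
     t = (x, x, a, b, cadd a b) \/ t = (a, b, x, x, cadd a b)].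

Definition perfect (N : pole221) : Prop :=
  forall t, (exists phi, colouring (pm N) phi /\ ptuple N phi = t) <-> perfect_set t.

(* Neg(G; u, v): delete u, w, v from G (path u w v with edge {a1,b1}  *)
(* between u and w and edge {a2,b2} between w and v).  The ends of    *)
(* the two path edges disappear; the remaining ends formerly          *)
(* incident with u, w, v become free.                                 *)
Definition Neg (G : mpole) (u w v : mV G) (a1 b1 a2 b2 : mD G) : mpole :=
  @Mpole ({x : mV G | x \notin [:: u; w; v]})
         ({d : mD G | d \notin [:: a1; b1; a2; b2]})
         (fun d => obind (fun x => insub x) (att (val d)))
         (fun d d' => eqE (val d) (val d')).

Definition negator_data (G : mpole) (u w v : mV G) (a1 b1 a2 b2 : mD G)
    (i1 i2 o1 o2 r : mD (Neg u w v a1 b1 a2 b2)) : Prop :=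
  [/\ snark G,
      [/\ u != w, w != v & u != v],
      [/\ att a1 = Some u, att b1 = Some w & eqE a1 b1],
      [/\ att a2 = Some w, att b2 = Some v & eqE a2 b2] &
      [/\ [/\ att (val i1) = Some u, att (val i2) = Some u & i1 != i2],
          [/\ att (val o1) = Some v, att (val o2) = Some v & o1 != o2] &
          att (val r) = Some w]].

Definition NegPole (G : mpole) (u w v : mV G) (a1 b1 a2 b2 : mD G)
    (i1 i2 o1 o2 r : mD (Neg u w v a1 b1 a2 b2)) : pole221 :=
  @Pole221 (Neg u w v a1 b1 a2 b2) i1 i2 o1 o2 r.

(* NN(N1, N2): junction of O1 = {po1 N1, po2 N1} with I2 = {pi1 N2,   *)
(* pi2 N2} (po1 N1 -- pi1 N2, po2 N1 -- pi2 N2), a new vertex joined  *)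
(* to r1, r2 and to a new dangling edge whose free end is r3.         *)
(* Ends of the new multipole: the ends of N1 and N2 except the four   *)
(* joined semiedges, plus the two ends of the new dangling edge       *)
(* (inr false at the new vertex, inr true = r3 free).                 *)
Section NN.
Variables N1 N2 : pole221.

Definition NNT : finType := (((mD (pm N1) + mD (pm N2)) + bool)%type).
Definition NNV : finType := (((mV (pm N1) + mV (pm N2)) + unit)%type).

Definition NNremoved : seq NNT :=
  [:: inl (inl (po1 N1)); inl (inl (po2 N1)); inl (inr (pi1 N2)); inl (inr (pi2 N2))].

Definition NND : finType := ({x : NNT | x \notin NNremoved}).

Definition NNattT (x : NNT) : option NNV :=
  match x with
  | inl (inl d) => if d == pr N1 then Some (inr tt)
                   else omap (fun y => inl (inl y)) (att d)
  | inl (inr d) => if d == pr N2 then Some (inr tt)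
                   else omap (fun y => inl (inr y)) (att d)
  | inr b => if b then None else Some (inr tt)
  end.

Definition NNlinkT (x y : NNT) : bool :=
  match x, y with
  | inl (inl a), inl (inl b) => lnk a b
  | inl (inr a), inl (inr b) => lnk a b
  | inl (inl a), inl (inr b) =>
      ((a == po1 N1) && (b == pi1 N2)) || ((a == po2 N1) && (b == pi2 N2))
  | inr _, inr _ => true
  | _, _ => false
  end.

Definition NNmp : mpole :=
  @Mpole NNV NND (fun x => NNattT (val x))
    (fun x y => connect (fun a b => NNlinkT a b || NNlinkT b a) (val x) (val y)).

Lemma NN_r3_notin : (inr true : NNT) \notin NNremoved.
Proof. by rewrite !inE. Qed.

Definition NNr3 : NND := exist _ (inr true) NN_r3_notin.

Definition NNsub (x : NNT) : NND := insubd NNr3 x.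

Definition NN : pole221 :=
  @Pole221 NNmp (NNsub (inl (inl (pi1 N1)))) (NNsub (inl (inl (pi2 N1))))
                (NNsub (inl (inr (po1 N2)))) (NNsub (inl (inr (po2 N2)))) NNr3.

End NN.

(* Main.v *)
From HB Require Import structures.
Require Import Defs.
From mathcomp Require Import all_boot.
Import Defs.
Set Implicit Arguments. Unset Strict Implicit. Unset Printing Implicit Defensive.

Lemma caddA : associative cadd.
Proof. by case=> [[] []] [[] []] [[] []]. Qed.
Lemma caddC : commutative cadd.
Proof. by case=> [[] []] [[] []]. Qed.
Lemma cadd0 : left_id czero cadd.
Proof. by case=> [[] []]. Qed.
HB.instance Definition _ := Monoid.isComLaw.Build col czero cadd caddA caddC cadd0.

Lemma caddxx x : cadd x x = czero.
Proof. by case: x => [[] []]. Qed.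

Lemma three_sum (x y z : col) : inK x -> inK y -> inK z -> x != y -> y != z -> x != z ->
  cadd (cadd x y) z = czero.
Proof. by case: x => [[] []]; case: y => [[] []]; case: z => [[] []]. Qed.

Lemma three_sum' (x y z : col) : inK x -> inK y -> inK z -> x != y -> y != z -> x != z ->
  z = cadd x y.
Proof. by case: x => [[] []]; case: y => [[] []]; case: z => [[] []]. Qed.

Lemma path_eq (T : finType) (e : rel T) (f : T -> col) :
  (forall a b, e a b -> f a = f b) -> forall x y, connect e x y -> f x = f y.
Proof.
move=> H x y /connectP [p Hp ->]; elim: p x Hp => //= a p IH x /andP [Hxa Hp].
by rewrite (H _ _ Hxa); exact: IH.
Qed.

Lemma card3_mem (T : finType) (P : pred T) p q s :
  #|P| = 3 -> P p -> P q -> P s -> uniq [:: p; q; s] ->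
  forall d, P d -> d \in [:: p; q; s].
Proof.
move=> HP Pp Pq Ps U d Pd; apply/negPn/negP => Hd.
have U4 : uniq [:: d; p; q; s] by rewrite cons_uniq Hd U.
have : #|[:: d; p; q; s]| <= #|P|.
  apply: subset_leq_card; apply/subsetP => z; rewrite !inE.
  by case/or4P => /eqP ->.
by rewrite HP (card_uniqP U4).
Qed.

Lemma card2_mem (T : finType) (P : pred T) p q :
  #|P| = 2 -> P p -> P q -> p != q ->
  forall d, P d -> d \in [:: p; q].
Proof.
move=> HP Pp Pq U d Pd; apply/negPn/negP => Hd.
have U3 : uniq [:: d; p; q] by rewrite cons_uniq Hd /= inE U.
have : #|[:: d; p; q]| <= #|P|.
  apply: subset_leq_card; apply/subsetP => z; rewrite !inE.
  by case/or3P => /eqP ->.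
by rewrite HP (card_uniqP U3).
Qed.

Lemma sum_list3 (T : finType) (P : pred T) (F : T -> col) p q s :
  uniq [:: p; q; s] -> (forall d, P d = (d \in [:: p; q; s])) ->
  \big[cadd/czero]_(d | P d) F d = cadd (cadd (F p) (F q)) (F s).
Proof.
move=> U HP; rewrite (eq_bigl (mem [:: p; q; s])) //.
rewrite -big_uniq // !big_cons big_nil.
by rewrite Monoid.mulm1 /= caddA.
Qed.

Section Parity.
Variable M : mpole.
Hypothesis Hwf : wf_edges M.

Lemma eqE_refl (d : mD M) : eqE d d.
Proof. exact: connect0. Qed.
Lemma eqE_sym (d d' : mD M) : eqE d d' = eqE d' d.
Proof. by apply: sym_connect_sym => a b; exact: orbC. Qed.
Lemma eqE_trans (d d' d'' : mD M) : eqE d d' -> eqE d' d'' -> eqE d d''.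
Proof. exact: connect_trans. Qed.

Lemma eqE_class2 (p q z : mD M) : p != q -> eqE p q -> eqE p z -> z = p \/ z = q.
Proof.
move=> npq Hpq Hpz.
have := @card2_mem _ [pred d' | eqE p d'] p q (Hwf p) (eqE_refl p) Hpq npq z Hpz.
by rewrite !inE => /orP [] /eqP ->; [left|right].
Qed.

Definition partner (d : mD M) := odflt d [pick d' | eqE d d' && (d' != d)].

Lemma partnerP d : eqE d (partner d) /\ partner d != d.
Proof.
rewrite /partner; case: pickP => [x /andP [H1 H2] //|H].
exfalso.
have : #|[pred d' | eqE d d']| <= #|[:: d]|.
  apply: subset_leq_card; apply/subsetP => z; rewrite !inE => Hz.
  by move: (H z) => /= /negbT; rewrite negb_and Hz /= negbK.
by rewrite Hwf (card_uniqP (isT : uniq [:: d])).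
Qed.

Lemma partnerK : involutive partner.
Proof.
move=> d; case: (partnerP d) => H1 H2; case: (partnerP (partner d)) => H3 H4.
have Hd : eqE d (partner (partner d)) by apply: eqE_trans H3.
have H2' : d != partner d by rewrite eq_sym.
case: (eqE_class2 H2' H1 Hd) => // E.
by rewrite E eqxx in H4.
Qed.

Lemma sum_inv (chi : mD M -> col) :
  (forall d d', eqE d d' -> chi d = chi d') ->
  \big[cadd/czero]_(d : mD M) chi d = czero.
Proof.
move=> Hc.
have inj_p : injective partner by apply: inv_inj; exact: partnerK.
pose B d := (enum_rank d < enum_rank (partner d))%N.
rewrite (bigID B) /=.
rewrite (reindex_inj inj_p (P := fun d => ~~ B d)) /=.
have -> : \big[cadd/czero]_(j | ~~ B (partner j)) chi (partner j)
        = \big[cadd/czero]_(j | B j) chi j.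
  apply: eq_big => j.
    rewrite /B partnerK -leqNgt leq_eqVlt.
    case: eqP => // /val_inj/enum_rank_inj E.
    by case: (partnerP j) => _; rewrite -E eqxx.
  move=> _; apply/esym/Hc; by case: (partnerP j).
exact: caddxx.
Qed.

Lemma parity (chi : mD M -> col) : is_graph M ->
  (forall d d', eqE d d' -> chi d = chi d') ->
  \big[cadd/czero]_(x : mV M) \big[cadd/czero]_(d | att d == Some x) chi d = czero.
Proof.
move=> Hg Hc; rewrite -[RHS](sum_inv Hc).
under eq_bigr do rewrite big_mkcond.
rewrite exchange_big /=; apply: eq_bigr => d _.
case E: (att d) (Hg d) => [y|] // _.
rewrite (bigD1 y) //= eqxx big1 ?Monoid.mulm1 // => x /negbTE nx.
by case: eqP => // [[]] /eqP; rewrite eq_sym nx.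
Qed.
End Parity.

Lemma sum3_distinct (T : finType) (P : pred T) (F : T -> col) :
  #|P| = 3 -> (forall d, P d -> inK (F d)) ->
  (forall d d', P d -> P d' -> d != d' -> F d != F d') ->
  \big[cadd/czero]_(d | P d) F d = czero.
Proof.
move=> HP Hk Hd.
have U := enum_uniq P.
have Hs : size (enum P) = 3 by rewrite -cardE.
case E: (enum P) Hs U => [|p [|q [|s [|]]]] // _ U.
have Hm z : P z = (z \in [:: p; q; s]) by rewrite -E mem_enum.
rewrite (sum_list3 _ U Hm).
have Pp : P p by rewrite Hm !inE eqxx.
have Pq : P q by rewrite Hm !inE eqxx orbT.
have Ps : P s by rewrite Hm !inE eqxx !orbT.
move: U; rewrite /= !inE negb_or => /andP [/andP [npq nps] /andP [nqs _]].
apply: three_sum; auto.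
Qed.

Lemma distinct3 (T : eqType) (F : T -> col) p q s d d' :
  F p != F q -> F q != F s -> F p != F s ->
  d \in [:: p; q; s] -> d' \in [:: p; q; s] -> d != d' -> F d != F d'.
Proof.
move=> H1 H2 H3; rewrite !inE => /or3P [] /eqP -> /or3P [] /eqP ->;
  rewrite ?eqxx // => _; rewrite // eq_sym //.
Qed.

Lemma cadd_inK a b : a != b -> inK (cadd a b).
Proof. by case: a => [[] []]; case: b => [[] []]. Qed.
Lemma cadd_ne a b : inK a -> inK b -> a != b -> cadd a b != a /\ cadd a b != b.
Proof. by case: a => [[] []]; case: b => [[] []]. Qed.
Lemma cadd_ne2 a b : inK a -> inK b -> inK (cadd a b) ->
  [/\ a != b, a != cadd a b & b != cadd a b].
Proof. by case: a => [[] []]; case: b => [[] []]. Qed.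
Lemma three_sum0 (x y z : col) : cadd (cadd x y) z = czero -> z = cadd x y.
Proof. by case: x => [[] []]; case: y => [[] []]; case: z => [[] []]. Qed.

Lemma sum_self a b : cadd (cadd (cadd a b) a) b = czero.
Proof. by case: a => [[] []]; case: b => [[] []]. Qed.

Lemma cadd_swap a b c : cadd (cadd a b) c = cadd (cadd a c) b.
Proof. by case: a => [[] []]; case: b => [[] []]; case: c => [[] []]. Qed.

Section Negator.
Variables (G : mpole) (u w v : mV G) (a1 b1 a2 b2 : mD G).
Variables (i1 i2 o1 o2 r : mD (Neg u w v a1 b1 a2 b2)).
Hypothesis HN : negator_data i1 i2 o1 o2 r.
Variable psi : mD (Neg u w v a1 b1 a2 b2) -> col.
Hypothesis Hpsi : colouring (Neg u w v a1 b1 a2 b2) psi.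

Let ND := mD (Neg u w v a1 b1 a2 b2).
Let X := cadd (psi i1) (psi i2).
Let Y := cadd (psi o1) (psi o2).
Definition chi (d : mD G) : col :=
  if @insub _ _ ND d is Some d' then psi d' else if (d == a1) || (d == b1) then X else Y.

Lemma neg_facts :
  [/\ wf_edges G, is_graph G, cubic G, ~ colourable G &
   [/\ [/\ u != w, w != v & u != v],
       [/\ att a1 = Some u, att b1 = Some w & eqE a1 b1],
       [/\ att a2 = Some w, att b2 = Some v & eqE a2 b2] &
       [/\ [/\ att (val i1) = Some u, att (val i2) = Some u & i1 != i2],
           [/\ att (val o1) = Some v, att (val o2) = Some v & o1 != o2] &
           att (val r) = Some w]]].
Proof. by case: HN => [[]] *; split. Qed.


Lemma neg_main :
  psi r = cadd X Y /\ (psi i1 = psi i2 \/ psi o1 = psi o2).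
Proof.
case: neg_facts => Hwf Hg Hcub Hnc [[nuw nwv nuv] [Ha1 Hb1 E1] [Ha2 Hb2 E2]
   [[Hi1 Hi2 ni12] [Ho1 Ho2 no12] Hr]].
case: Hpsi => Pk Pl Pv.
have nvu := nuv; rewrite eq_sym in nvu.
have nwu := nuw; rewrite eq_sym in nwu.
have nvw := nwv; rewrite eq_sym in nvw.
have ne_att (p q : mD G) x y : att p = Some x -> att q = Some y -> x != y -> p != q.
  move=> Hp Hq nxy; apply/eqP => E; move: Hq; rewrite -E Hp => -[] Exy.
  by move: nxy; rewrite Exy eqxx.
have na1b1 : a1 != b1 by apply: (ne_att _ _ _ _ Ha1 Hb1).
have na2b2 : a2 != b2 by apply: (ne_att _ _ _ _ Ha2 Hb2).
have nb1a2 : b1 != a2.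
  apply/eqP => E; rewrite -E in E2.
  have := eqE_class2 Hwf na1b1 E1 (eqE_trans E1 E2).
  case=> E3; move: Hb2; rewrite E3 ?Ha1 ?Hb1 => -[] E4.
    by move: nuv; rewrite E4 eqxx.
  by move: nwv; rewrite E4 eqxx.
have Hnot (d : mD G) x : att d = Some x -> x \notin [:: u; w; v] -> d \notin [:: a1; b1; a2; b2].
  move=> Hd Hx; rewrite !inE; apply/negP => /or4P [] /eqP E; move: Hd; rewrite E
    ?Ha1 ?Hb1 ?Ha2 ?Hb2 => -[] E'; by move: Hx; rewrite -E' !inE eqxx ?orbT.
have Hval (d : ND) : val d \notin [:: a1; b1; a2; b2] := valP d.
have chi_val (d : ND) : chi (val d) = psi d by rewrite /chi valK.
have chiR1 d : (d == a1) || (d == b1) -> chi d = X.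
  move=> H; rewrite /chi insubN //= ?H // negbK !inE.
  by case/orP: H => ->; rewrite ?orbT.
have e21 : (a2 == a1) = false by apply/negbTE/(ne_att _ _ _ _ Ha2 Ha1 nwu).
have e22 : (a2 == b1) = false by rewrite eq_sym; apply/negbTE.
have e23 : (b2 == a1) = false by apply/negbTE/(ne_att _ _ _ _ Hb2 Ha1 nvu).
have e24 : (b2 == b1) = false by apply/negbTE/(ne_att _ _ _ _ Hb2 Hb1 nvw).
have chiR2 d : (d == a2) || (d == b2) -> chi d = Y.
  move=> H; rewrite /chi insubN /=; last first.
    by rewrite negbK !inE; case/orP: H => ->; rewrite ?orbT.
  by case/orP: H => /eqP ->; rewrite ?e21 ?e22 ?e23 ?e24.
have R1cl d d' : eqE d d' -> (d == a1) || (d == b1) -> (d' == a1) || (d' == b1).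
  move=> Hdd' H.
  have Ha : eqE a1 d' by case/orP: H => /eqP E; rewrite E in Hdd' => //; apply: eqE_trans E1 Hdd'.
  by case: (eqE_class2 Hwf na1b1 E1 Ha) => ->; rewrite eqxx ?orbT.
have R2cl d d' : eqE d d' -> (d == a2) || (d == b2) -> (d' == a2) || (d' == b2).
  move=> Hdd' H.
  have Ha : eqE a2 d' by case/orP: H => /eqP E; rewrite E in Hdd' => //; apply: eqE_trans E2 Hdd'.
  by case: (eqE_class2 Hwf na2b2 E2 Ha) => ->; rewrite eqxx ?orbT.
have insN (d : mD G) (Hd : d \notin [:: a1; b1; a2; b2]) :
    @insub _ _ ND d = Some (Sub d Hd) := @insubT _ _ ND d Hd.
have key d d' : eqE d d' -> chi d = chi d'.
  move=> H.
  case H1: ((d == a1) || (d == b1)); first by rewrite chiR1 // chiR1 // (R1cl d).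
  case H1': ((d' == a1) || (d' == b1)).
    by move: (R1cl d' d); rewrite eqE_sym H1 => /(_ H H1').
  case H2: ((d == a2) || (d == b2)); first by rewrite chiR2 // chiR2 // (R2cl d).
  case H2': ((d' == a2) || (d' == b2)).
    by move: (R2cl d' d); rewrite eqE_sym H2 => /(_ H H2').
  have Hd : d \notin [:: a1; b1; a2; b2] by rewrite !inE orbA H1 /= H2.
  have Hd' : d' \notin [:: a1; b1; a2; b2] by rewrite !inE orbA H1' /= H2'.
  rewrite /chi (insN _ Hd) (insN _ Hd'); apply: Pl.
  by rewrite /= ?SubK.
have nv (d : ND) : [/\ val d != a1, val d != b1, val d != a2 & val d != b2].
  by move: (Hval d); rewrite !inE !negb_or => /and4P.
have M3 (x : mV G) (p q s : mD G) : att p = Some x -> att q = Some x -> att s = Some x ->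
    uniq [:: p; q; s] -> forall d, (att d == Some x) = (d \in [:: p; q; s]).
  move=> Hp Hq Hs U d; apply/idP/idP.
    move=> Hd; apply: (card3_mem (P := [pred d | att d == Some x])) => //=.
    - by rewrite -(Hcub x); apply: eq_card.
    - by rewrite Hp.
    - by rewrite Hq.
    - by rewrite Hs.
  by rewrite !inE => /or3P [] /eqP ->; rewrite ?Hp ?Hq ?Hs.
have Uu : uniq [:: a1; val i1; val i2].
  case: (nv i1) => h1 _ _ _; case: (nv i2) => h2 _ _ _.
  by rewrite /= !inE negb_or ![a1 == _]eq_sym h1 h2 val_eqE ni12.
have Uw : uniq [:: b1; val r; a2].
  case: (nv r) => _ h1 h2 _.
  by rewrite /= !inE negb_or nb1a2 h2 andbT eq_sym h1.
have Uv : uniq [:: b2; val o1; val o2].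
  case: (nv o1) => _ _ _ h1; case: (nv o2) => _ _ _ h2.
  by rewrite /= !inE negb_or ![b2 == _]eq_sym h1 h2 val_eqE no12.
have Mu := M3 _ _ _ _ Ha1 Hi1 Hi2 Uu.
have Mw := M3 _ _ _ _ Hb1 Hr Ha2 Uw.
have Mv := M3 _ _ _ _ Hb2 Ho1 Ho2 Uv.
have cX : chi a1 = X by rewrite chiR1 ?eqxx.
have cX' : chi b1 = X by rewrite chiR1 ?eqxx ?orbT.
have cY : chi a2 = Y by rewrite chiR2 ?eqxx.
have cY' : chi b2 = Y by rewrite chiR2 ?eqxx ?orbT.
have Hin x (d : mD G) (Hx : x \notin [:: u; w; v]) (Hd : att d = Some x) :
   exists Hd' : d \notin [:: a1; b1; a2; b2],
     chi d = psi (Sub d Hd') /\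
     att (Sub d Hd' : ND) = Some (Sub x Hx).
  have Hd' := Hnot _ _ Hd Hx; exists Hd'; split; first by rewrite /chi (insN _ Hd').
  by rewrite /= ?SubK Hd /= (@insubT _ _ (mV (Neg u w v a1 b1 a2 b2)) x Hx).
have Hpar := parity Hwf Hg key.
have H0 : \big[cadd/czero]_(x | x != w) \big[cadd/czero]_(d | att d == Some x) chi d = czero.
  apply: big1 => x nxw.
  case: (eqVneq x u) => [->|nxu].
    by rewrite (sum_list3 _ Uu Mu) cX !chi_val sum_self.
  case: (eqVneq x v) => [->|nxv].
    by rewrite (sum_list3 _ Uv Mv) cY' !chi_val sum_self.
  have Hx : x \notin [:: u; w; v] by rewrite !inE negb_or nxu negb_or nxw nxv.
  apply: sum3_distinct; first exact: Hcub.
    by move=> d /eqP Hd; case: (Hin _ _ Hx Hd) => Hd' [-> _]; exact: Pk.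
  move=> d d' /eqP Hd /eqP Hd' ndd'.
  case: (Hin _ _ Hx Hd) => e [-> Ae]; case: (Hin _ _ Hx Hd') => e' [-> Ae'].
  apply: Pv Ae Ae'.
  by rewrite -val_eqE !SubK.
rewrite (bigD1 w) //= H0 Monoid.mulm1 in Hpar.
rewrite (sum_list3 _ Uw Mw) cX' cY chi_val in Hpar.
have Hrel : psi r = cadd X Y.
  apply: three_sum0; rewrite -Hpar.
  exact: cadd_swap.
split => //.
case: (psi i1 =P psi i2) => [|n1]; first by left.
case: (psi o1 =P psi o2) => [|n2]; first by right.
exfalso; apply: Hnc; exists chi; split.
- move=> d; rewrite /chi; case: insubP => [d' _ _|_]; first exact: Pk.
  by case: ifP => _; apply: cadd_inK; apply/eqP.
- by move=> d d' H; apply: key; apply: connect1; rewrite H.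
have kX : inK X by apply: cadd_inK; apply/eqP.
have kY : inK Y by apply: cadd_inK; apply/eqP.
have kXY : inK (cadd X Y) by rewrite -Hrel; exact: Pk.
move=> d d' x ndd' Hd Hd'.
case: (eqVneq x u) => [Ex|nxu].
  rewrite Ex in Hd Hd'.
  move/eqP: Hd; rewrite Mu => Hd; move/eqP: Hd'; rewrite Mu => Hd'.
  have h1 : chi a1 != chi (val i1).
    by rewrite cX chi_val; case: (cadd_ne (Pk i1) (Pk i2) (introN eqP n1)) => h _.
  have h2 : chi (val i1) != chi (val i2) by rewrite !chi_val; exact/eqP.
  have h3 : chi a1 != chi (val i2).
    by rewrite cX chi_val; case: (cadd_ne (Pk i1) (Pk i2) (introN eqP n1)) => _ h.
  exact: (distinct3 h1 h2 h3 Hd Hd' ndd').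
case: (eqVneq x v) => [Ex|nxv].
  rewrite Ex in Hd Hd'.
  move/eqP: Hd; rewrite Mv => Hd; move/eqP: Hd'; rewrite Mv => Hd'.
  have h1 : chi b2 != chi (val o1).
    by rewrite cY' chi_val; case: (cadd_ne (Pk o1) (Pk o2) (introN eqP n2)) => h _.
  have h2 : chi (val o1) != chi (val o2) by rewrite !chi_val; exact/eqP.
  have h3 : chi b2 != chi (val o2).
    by rewrite cY' chi_val; case: (cadd_ne (Pk o1) (Pk o2) (introN eqP n2)) => _ h.
  exact: (distinct3 h1 h2 h3 Hd Hd' ndd').
case: (eqVneq x w) => [Ex|nxw].
  rewrite Ex in Hd Hd'.
  move/eqP: Hd; rewrite Mw => Hd; move/eqP: Hd'; rewrite Mw => Hd'.
  case: (cadd_ne2 kX kY kXY) => h1 h2 h3.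
  have g1 : chi b1 != chi (val r) by rewrite cX' chi_val Hrel.
  have g2 : chi (val r) != chi a2 by rewrite cY chi_val Hrel eq_sym.
  have g3 : chi b1 != chi a2 by rewrite cX' cY.
  exact: (distinct3 g1 g2 g3 Hd Hd' ndd').
have Hx : x \notin [:: u; w; v] by rewrite !inE negb_or nxu negb_or nxw nxv.
case: (Hin _ _ Hx Hd) => e [-> Ae]; case: (Hin _ _ Hx Hd') => e' [-> Ae'].
apply: Pv Ae Ae'.
by rewrite -val_eqE !SubK.
Qed.

End Negator.

Definition free5 (N : pole221) : Prop :=
  [/\ [/\ att (pi1 N) = None, att (pi2 N) = None, att (po1 N) = None,
          att (po2 N) = None & att (pr N) = None] &
      uniq [:: pi1 N; pi2 N; po1 N; po2 N; pr N]].

Definition negprop (N : pole221) : Prop :=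
  forall psi, colouring (pm N) psi ->
    psi (pr N) = cadd (cadd (psi (pi1 N)) (psi (pi2 N))) (cadd (psi (po1 N)) (psi (po2 N)))
    /\ (psi (pi1 N) = psi (pi2 N) \/ psi (po1 N) = psi (po2 N)).

Lemma neg_free5 (G : mpole) (u w v : mV G) (a1 b1 a2 b2 : mD G)
  (i1 i2 o1 o2 r : mD (Neg u w v a1 b1 a2 b2)) :
  negator_data i1 i2 o1 o2 r -> free5 (NegPole i1 i2 o1 o2 r) /\ negprop (NegPole i1 i2 o1 o2 r).
Proof.
move=> HN; split; last first.
  by move=> psi Hpsi; have := neg_main HN Hpsi.
case: (neg_facts HN) => _ _ _ _ [[nuw nwv nuv] _ _ [[Hi1 Hi2 ni12] [Ho1 Ho2 no12] Hr]].
have attN (d : mD (Neg u w v a1 b1 a2 b2)) x : att (val d) = Some x -> x \in [:: u; w; v] ->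
    att d = None.
  by move=> Hd Hx; rewrite /= Hd /= insubN // negbK.
have ne (p q : mD (Neg u w v a1 b1 a2 b2)) x y : att (val p) = Some x -> att (val q) = Some y ->
    x != y -> p != q.
  move=> Hp Hq nxy; apply/eqP => E; move: Hq; rewrite -E Hp => -[] Exy.
  by move: nxy; rewrite Exy eqxx.
split; first split; rewrite /=;
  try (apply: attN; [eassumption | by rewrite !inE eqxx ?orbT]).
rewrite !inE !negb_or ni12 no12 /=.
rewrite (ne _ _ _ _ Hi1 Ho1 nuv) (ne _ _ _ _ Hi1 Ho2 nuv) (ne _ _ _ _ Hi1 Hr nuw).
rewrite (ne _ _ _ _ Hi2 Ho1 nuv) (ne _ _ _ _ Hi2 Ho2 nuv) (ne _ _ _ _ Hi2 Hr nuw).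
rewrite eq_sym in nwv.
by rewrite (ne _ _ _ _ Ho1 Hr nwv) (ne _ _ _ _ Ho2 Hr nwv).
Qed.

Lemma eq_iff_cadd (a b : col) : (a == b) = (cadd a b == czero).
Proof. by case: a => [[] []]; case: b => [[] []]. Qed.

Lemma alg (X Y Z : col) : (X = czero \/ Y = czero) -> (Y = czero \/ Z = czero) ->
  inK (cadd X Y) -> inK (cadd Y Z) -> cadd X Y != cadd Y Z ->
  [/\ X != czero, Z != czero & cadd (cadd X Z) (cadd (cadd X Y) (cadd Y Z)) = czero].
Proof.
by case: X => [[] []]; case: Y => [[] []]; case: Z => [[] []] => //=;
  do 2 (case=> // H; try (by inversion H)).
Qed.

Lemma caddA' x y z : cadd (cadd x y) z = cadd x (cadd y z).
Proof. by case: x => [[] []]; case: y => [[] []]; case: z => [[] []]. Qed.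

Section NNproof.
Variables N1 N2 : pole221.
Hypotheses (F1 : free5 N1) (F2 : free5 N2).

Let T := NNT N1 N2.
Let D := NND N1 N2.
Let R := fun a b : T => @NNlinkT N1 N2 a b || @NNlinkT N1 N2 b a.
Let M := NN N1 N2.

Lemma notin1 d : d != po1 N1 -> d != po2 N1 -> (inl (inl d) : T) \notin NNremoved N1 N2.
Proof. by move=> h1 h2; rewrite !inE /= negb_or h1 negb_or h2. Qed.
Lemma notin2 d : d != pi1 N2 -> d != pi2 N2 -> (inl (inr d) : T) \notin NNremoved N1 N2.
Proof. by move=> h1 h2; rewrite !inE /= !negb_or h1 h2. Qed.
Lemma notin3 b : (inr b : T) \notin NNremoved N1 N2.
Proof. by rewrite !inE. Qed.

Lemma valsub (t : T) : t \notin NNremoved N1 N2 -> val (NNsub t) = t.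
Proof. by move=> H; rewrite /NNsub val_insubd H. Qed.


Lemma part1 (phi : mD (pm M) -> col) : negprop N1 -> negprop N2 -> colouring (pm M) phi ->
     [/\ phi (pi1 M) != phi (pi2 M),
         phi (po1 M) != phi (po2 M) &
         cadd (cadd (cadd (cadd (phi (pi1 M)) (phi (pi2 M))) (phi (po1 M)))
                    (phi (po2 M))) (phi (pr M)) = czero].
Proof.
move=> NP1 NP2 [Pk Pl Pv].
case: F1 => [[a1i a1i' a1o a1o' a1r] U1].
case: F2 => [[a2i a2i' a2o a2o' a2r] U2].
pose ph (t : T) := if [pick y : D | connect R t (val y)] is Some y then phi y else (true, true).
have Rsym : connect_sym R by apply: sym_connect_sym => a b; rewrite /R orbC.
have h1 t t' : connect R t t' -> ph t = ph t'.
  move=> H; rewrite /ph (@eq_pick _ (fun y : D => connect R t (val y))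
                                   (fun y : D => connect R t' (val y))) //.
  move=> y /=; apply/idP/idP => H'.
    by apply: connect_trans H'; rewrite Rsym.
  exact: connect_trans H H'.
have h2 (y : D) : ph (val y) = phi y.
  rewrite /ph; case: pickP => [y' Hy'|H]; last by move: (H y); rewrite connect0.
  by apply/esym/Pl.
have h3 t : inK (ph t) by rewrite /ph; case: pickP => [y _|_] //; exact: Pk.
pose psi1 d := ph (inl (inl d)).
pose psi2 d := ph (inl (inr d)).
have Hatt1 d x : att d = Some x -> [/\ d != po1 N1, d != po2 N1 & d != pr N1].
  by move=> Hd; split; apply/eqP => E; move: Hd; rewrite E ?a1o ?a1o' ?a1r.
have Hatt2 d x : att d = Some x -> [/\ d != pi1 N2, d != pi2 N2 & d != pr N2].
  by move=> Hd; split; apply/eqP => E; move: Hd; rewrite E ?a2i ?a2i' ?a2r.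
have C1 : colouring (pm N1) psi1.
  split; first by move=> d; exact: h3.
    by move=> d d' H; apply: h1; apply: connect1; rewrite /R /= H.
  move=> d d' x ndd' Hd Hd'.
  case: (Hatt1 _ _ Hd) => n1 n2 n3; case: (Hatt1 _ _ Hd') => n1' n2' n3'.
  have V := valsub (notin1 n1 n2); have V' := valsub (notin1 n1' n2').
  rewrite /psi1 -V -V' !h2.
  apply: (Pv _ _ (inl (inl x))).
  - by rewrite -val_eqE V V' /=.
  - by rewrite /= V /= (negbTE n3) Hd.
  - by rewrite /= V' /= (negbTE n3') Hd'.
have C2 : colouring (pm N2) psi2.
  split; first by move=> d; exact: h3.
    by move=> d d' H; apply: h1; apply: connect1; rewrite /R /= H.
  move=> d d' x ndd' Hd Hd'.
  case: (Hatt2 _ _ Hd) => n1 n2 n3; case: (Hatt2 _ _ Hd') => n1' n2' n3'.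
  have V := valsub (notin2 n1 n2); have V' := valsub (notin2 n1' n2').
  rewrite /psi2 -V -V' !h2.
  apply: (Pv _ _ (inl (inr x))).
  - by rewrite -val_eqE V V' /=.
  - by rewrite /= V /= (negbTE n3) Hd.
  - by rewrite /= V' /= (negbTE n3') Hd'.
move: U1; rewrite /= !inE !negb_or => /and5P [/and4P [_ u1 u2 _] /and3P [u3 u4 _] /andP [_ u5] u6 _].
move: U2; rewrite /= !inE !negb_or => /and5P [/and4P [_ v1 v2 v7] /and3P [v3 v4 v8] /andP [_ v5] v6 _].
have nn (p q : mD (pm N1)) : p != q -> q != p by rewrite eq_sym.
have ei : phi (pi1 M) = psi1 (pi1 N1) by rewrite -h2 valsub ?notin1.
have ei' : phi (pi2 M) = psi1 (pi2 N1) by rewrite -h2 valsub ?notin1.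
have eo : phi (po1 M) = psi2 (po1 N2).
  by rewrite -h2 valsub ?notin2 // eq_sym.
have eo' : phi (po2 M) = psi2 (po2 N2).
  by rewrite -h2 valsub ?notin2 // eq_sym.
have er : phi (pr M) = ph (inr false).
  by rewrite -h2; apply: h1; apply: connect1.
have l1 : psi1 (po1 N1) = psi2 (pi1 N2).
  by apply: h1; apply: connect1; rewrite /R /= !eqxx.
have l2 : psi1 (po2 N1) = psi2 (pi2 N2).
  by apply: h1; apply: connect1; rewrite /R /= !eqxx orbT.
have n5 : pr N1 != po1 N1 by rewrite eq_sym.
have n6 : pr N1 != po2 N1 by rewrite eq_sym.
have V1 := valsub (notin1 n5 n6).
have n7 : pr N2 != pi1 N2 by rewrite eq_sym.
have n8 : pr N2 != pi2 N2 by rewrite eq_sym.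
have V2 := valsub (notin2 n7 n8).
have V0 := valsub (notin3 false).
have Ha (y : D) : val y \notin NNremoved N1 N2 := valP y.
have vtx (y y' : D) : val y != val y' -> NNattT (val y) = Some (inr tt) ->
   NNattT (val y') = Some (inr tt) -> ph (val y) != ph (val y').
  move=> nyy Hy Hy'; rewrite !h2; apply: (Pv _ _ (inr tt)) => //.
have d12 : psi1 (pr N1) != psi2 (pr N2).
  rewrite /psi1 /psi2 -V1 -V2; apply: vtx; rewrite ?V1 ?V2 //= ?eqxx //.
have d10 : psi1 (pr N1) != ph (inr false).
  rewrite /psi1 -V1 -V0; apply: vtx; rewrite ?V1 ?V0 //= ?eqxx //.
have d20 : psi2 (pr N2) != ph (inr false).
  rewrite /psi2 -V2 -V0; apply: vtx; rewrite ?V2 ?V0 //= ?eqxx //.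
have r3E : ph (inr false) = cadd (psi1 (pr N1)) (psi2 (pr N2)) :=
  three_sum' (h3 _) (h3 _) (h3 _) d12 d20 d10.
case: (NP1 _ C1) => /= r1E o1.
case: (NP2 _ C2) => /= r2E o2.
rewrite -l1 -l2 in r2E o2.
have := @alg (cadd (psi1 (pi1 N1)) (psi1 (pi2 N1))) (cadd (psi1 (po1 N1)) (psi1 (po2 N1)))
             (cadd (psi2 (po1 N2)) (psi2 (po2 N2))).
rewrite -r1E -r2E.
case=> //.
- by case: o1 => ->; rewrite caddxx; [left|right].
- by case: o2 => ->; rewrite caddxx; [left|right].
- exact: h3.
- exact: h3.
move=> nX nZ Hs.
rewrite ei ei' eo eo' er r3E r1E r2E.
split; first by rewrite eq_iff_cadd.
  by rewrite eq_iff_cadd.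
by rewrite (caddA' (cadd _ _) (psi2 (po1 N2))) -r1E -r2E.
Qed.

Lemma attL1 (s : T) z : @NNattT N1 N2 s = Some (inl (inl z)) ->
  exists s', s = inl (inl s') /\ att s' = Some z.
Proof.
case: s => [[s|s]|[]] //=; case: ifP => // _; case E: (att s) => [y|] //= [<-]; eauto.
Qed.
Lemma attL2 (s : T) z : @NNattT N1 N2 s = Some (inl (inr z)) ->
  exists s', s = inl (inr s') /\ att s' = Some z.
Proof.
case: s => [[s|s]|[]] //=; case: ifP => // _; case E: (att s) => [y|] //= [<-]; eauto.
Qed.
Lemma attV (s : T) : @NNattT N1 N2 s = Some (inr tt) ->
  s \in [:: inl (inl (pr N1)); inl (inr (pr N2)); inr false].
Proof.
case: s => [[s|s]|[]] //=; case: ifP => [/eqP ->|_]; rewrite ?inE ?eqxx ?orbT //;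
  by case: (att s).
Qed.

Lemma sum0_eq (X e : col) : cadd X e = czero -> e = X.
Proof. by case: X => [[] []]; case: e => [[] []]. Qed.

Lemma part2 : perfect N1 -> perfect N2 ->
   forall a b c d e : col,
     inK a -> inK b -> inK c -> inK d -> inK e ->
     a != b -> c != d ->
     cadd (cadd (cadd (cadd a b) c) d) e = czero ->
     exists phi : mD (pm M) -> col,
       colouring (pm M) phi /\ ptuple M phi = (a, b, c, d, e).
Proof.
move=> P1 P2 a b c d e ka kb kc kd ke nab ncd Hs.
case: F1 => [_ U1]; case: F2 => [_ U2].
move: U1; rewrite /= !inE !negb_or => /and5P [/and4P [_ u1 u2 _] /and3P [u3 u4 _] /andP [_ u5] u6 _].
move: U2; rewrite /= !inE !negb_or => /and5P [/and4P [_ v1 v2 v7] /and3P [v3 v4 v8] /andP [_ v5] v6 _].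
pose x : col := (true, true).
have [psi1 [C1 T1]] : exists psi, colouring (pm N1) psi /\ ptuple N1 psi = (a, b, x, x, cadd a b).
  by apply/P1; exists x, a, b; split => //; right.
have [psi2 [C2 T2]] : exists psi, colouring (pm N2) psi /\ ptuple N2 psi = (x, x, c, d, cadd c d).
  by apply/P2; exists x, c, d; split => //; left.
move: T1 => [e1 e2 e3 e4 e5]; move: T2 => [f1 f2 f3 f4 f5].
case: C1 => K1 L1 V1; case: C2 => K2 L2 V2.
pose f (t : T) := match t with inl (inl s) => psi1 s | inl (inr s) => psi2 s | inr _ => e end.
have eE : e = cadd (cadd a b) (cadd c d) by apply: sum0_eq; rewrite -(caddA' (cadd a b) c d).
have [g1 g2 g3] : [/\ cadd a b != cadd c d, cadd a b != e & cadd c d != e].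
  by rewrite eE; apply: cadd_ne2; rewrite -?eE //; apply: cadd_inK.
exists (fun y : D => f (val y)); split.
  split.
  - move=> y; case: (val y) => [[s|s]|_] /=; auto.
  - move=> y y' /= H; apply: (path_eq _ H) => s t.
    case: s => [[s|s]|s]; case: t => [[t|t]|t] //=;
      try (by case/orP => H'; [apply: L1 | apply/esym; apply: L1]);
      try (by case/orP => H'; [apply: L2 | apply/esym; apply: L2]);
      rewrite ?orbF; case/orP => /andP [/eqP -> /eqP ->]; congruence.
  move=> y y' z nyy Hy Hy'.
  have nv : val y != val y' by rewrite val_eqE.
  move: nv Hy Hy' => /=; move: (val y) (val y') => s t nst.
  case: z => [[z|z]|[]].
  - move=> /attL1 [s' [Es Hs']] /attL1 [t' [Et Ht']]; move: nst; rewrite Es Et /= => nst.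
    by apply: V1 Hs' Ht'; apply: contra nst => /eqP ->.
  - move=> /attL2 [s' [Es Hs']] /attL2 [t' [Et Ht']]; move: nst; rewrite Es Et /= => nst.
    by apply: V2 Hs' Ht'; apply: contra nst => /eqP ->.
  move=> /attV Hs' /attV Ht'.
  by apply: (distinct3 (F := f) _ _ _ Hs' Ht' nst); rewrite /= ?e5 ?f5.
rewrite /ptuple /= !valsub ?notin1 ?notin2 //; first by rewrite /f /= e1 e2 f3 f4.
all: by rewrite eq_sym.
Qed.

End NNproof.
Theorem mainTheorem2
  (G1 : mpole) (u1 w1 v1 : mV G1) (a1 b1 c1 d1 : mD G1)
  (i1 i1' o1 o1' r1 : mD (Neg u1 w1 v1 a1 b1 c1 d1))
  (G2 : mpole) (u2 w2 v2 : mV G2) (a2 b2 c2 d2 : mD G2)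
  (i2 i2' o2 o2' r2 : mD (Neg u2 w2 v2 a2 b2 c2 d2)) :
  negator_data i1 i1' o1 o1' r1 ->
  negator_data i2 i2' o2 o2' r2 ->
  let N1 := NegPole i1 i1' o1 o1' r1 in
  let N2 := NegPole i2 i2' o2 o2' r2 in
  let M := NN N1 N2 in
  (forall phi : mD (pm M) -> col, colouring (pm M) phi ->
     [/\ phi (pi1 M) != phi (pi2 M),
         phi (po1 M) != phi (po2 M) &
         cadd (cadd (cadd (cadd (phi (pi1 M)) (phi (pi2 M))) (phi (po1 M)))
                    (phi (po2 M))) (phi (pr M)) = czero])
  /\
  (perfect N1 -> perfect N2 ->
   forall a b c d e : col,
     inK a -> inK b -> inK c -> inK d -> inK e ->
     a != b -> c != d ->
     cadd (cadd (cadd (cadd a b) c) d) e = czero ->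
     exists phi : mD (pm M) -> col,
       colouring (pm M) phi /\ ptuple M phi = (a, b, c, d, e)).
Proof.
move=> HN1 HN2 N1 N2 M.
have [F1 NP1] := neg_free5 HN1.
have [F2 NP2] := neg_free5 HN2.
split.
  by move=> phi Hphi; exact: (part1 F1 F2 NP1 NP2 Hphi).
exact: (part2 F1 F2).
Qed.
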